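(* Let $\mathcal{P}$ be a polyomino, $\mathbb{K}$ a field, $S=\mathbb{K}[x_v\mid v\in V(\mathcal{P})]$, $I_{\mathcal{P}}$ the polyomino ideal and $\mathbb{K}[\mathcal{P}]=S/I_{\mathcal{P}}$. Suppose $\mathcal{W}:I_1,\dots,I_\ell$ is a zig-zag walk of $\mathcal{P}$ with corners $v_i,z_i,u_i,v_{i+1}$ of $I_i$ as in the definition of zig-zag walk. Then $x_{v_1},\dots,x_{v_\ell}$ and $$f_{\mathcal{W}}=\prod_{k=1}^{\ell}x_{z_k}-\prod_{j=1}^{\ell}x_{u_j}$$ are zerodivisors of $\mathbb{K}[\mathcal{P}]$, with $x_{v_i}f_{\mathcal{W}}\in I_{\mathcal{P}}$ for $i=1,\dots,\ell$.
   Context: For $a\in\mathbb{N}^2$ the cell $[a,a+(1,1)]$ has vertices $a,a+(1,0),a+(0,1),a+(1,1)$ and four edges. A polyomino $\mathcal{P}$ is a finite nonempty set of cells such that any two cells are joined by a sequence of cells of $\mathcal{P}$, consecutive ones sharing an edge. $V(\mathcal{P})$ is the union of the vertex sets of its cells. For $a=(i,j)$, $b=(k,\ell)$ with $i<k$, $j<\ell$, the interval $[a,b]=\{(p,q): i\le p\le k,\ j\le q\le\ell\}$ has diagonal corners $a,b$ and anti-diagonal corners $(i,\ell),(k,j)$; it is an inner interval of $\mathcal{P}$ if all its cells belong to $\mathcal{P}$. $I_{\mathcal{P}}$ is generated by the binomials $x_ax_b-x_cx_d$ for inner intervals $[a,b]$ with anti-diagonal corners $c,d$. A horizontal (resp.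 vertical) edge interval of $\mathcal{P}$ is a set of lattice points $\{(t,j):i\le t\le k\}$ (resp. $\{(i,t): j\le t\le k\}$) such that each pair of consecutive points forms an edge of some cell of $\mathcal{P}$. A zig-zag walk of $\mathcal{P}$ is a sequence of distinct inner intervals $I_1,\dots,I_\ell$ of $\mathcal{P}$ such that, for each $i$, $v_i,z_i$ are the diagonal (resp. anti-diagonal) corners and $u_i,v_{i+1}$ the anti-diagonal (resp. diagonal) corners of $I_i$, and: (Z1) $I_1\cap I_\ell=\{v_1\}=\{v_{\ell+1}\}$ and $I_i\cap I_{i+1}=\{v_{i+1}\}$ for $i=1,\dots,\ell-1$; (Z2) $v_i$ and $v_{i+1}$ lie on a common (horizontal or vertical) edge interval of $\mathcal{P}$ for $i=1,\dots,\ell$; (Z3) for $i\ne j$ in $\{1,\dots,\ell\}$ there is no inner interval of $\mathcal{P}$ containing both $z_i$ and $z_j$. *)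

(* Defs.v *)
From HB Require Import structures.
From mathcomp Require Import all_boot all_algebra.
From mathcomp Require Import mpoly.
Set Implicit Arguments. Unset Strict Implicit. Unset Printing Implicit Defensive.
Import GRing.Theory.
Local Open Scope ring_scope.

(* Lattice points of N^2. A cell [a, a+(1,1)] is represented by its corner a. *)
Definition point := (nat * nat)%type.

Definition cell_vertices (a : point) : seq point :=
  [:: a; (a.1.+1, a.2); (a.1, a.2.+1); (a.1.+1, a.2.+1)].

Definition cell_edges (a : point) : seq (point * point) :=
  [:: (a, (a.1.+1, a.2)); (a, (a.1, a.2.+1));
      ((a.1.+1, a.2), (a.1.+1, a.2.+1)); ((a.1, a.2.+1), (a.1.+1, a.2.+1))].

Definition adjacent_cells (a b : point) : bool :=
  ((a.1 == b.1) && ((a.2.+1 == b.2) || (b.2.+1 == a.2))) ||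
  ((a.2 == b.2) && ((a.1.+1 == b.1) || (b.1.+1 == a.1))).

Definition is_polyomino (P : seq point) : Prop :=
  P != [::] /\
  forall a b, a \in P -> b \in P ->
    exists p : seq point,
      [/\ all (fun c => c \in P) p, path adjacent_cells a p & last a p = b].

Definition VP (P : seq point) : seq point := undup (flatten (map cell_vertices P)).
Definition nV (P : seq point) : nat := size (VP P).

(* S = K[x_v | v in V(P)] is {mpoly K[nV P]}, x_v being the variable indexed by
   the position of v in VP P (x_v := 0 if v is not a vertex; never used so). *)
Definition xv (K : fieldType) (P : seq point) (v : point) : {mpoly K[nV P]} :=
  if (insub (index v (VP P)) : option 'I_(nV P)) is Some i then 'X_i else 0.

(* An interval [a,b] is given by the pair (a,b); it is valid when a < b
   componentwise. *)
Definition pinterval := (point * point)%type.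
Definition valid_interval (I : pinterval) : bool :=
  (I.1.1 < I.2.1)%N && (I.1.2 < I.2.2)%N.
Definition in_interval (I : pinterval) (p : point) : bool :=
  (I.1.1 <= p.1 <= I.2.1)%N && (I.1.2 <= p.2 <= I.2.2)%N.
Definition cell_of_interval (I : pinterval) (c : point) : bool :=
  (I.1.1 <= c.1 < I.2.1)%N && (I.1.2 <= c.2 < I.2.2)%N.
Definition inner_interval (P : seq point) (I : pinterval) : Prop :=
  valid_interval I /\ forall c, cell_of_interval I c -> c \in P.

Definition diag1 (I : pinterval) : point := I.1.
Definition diag2 (I : pinterval) : point := I.2.
Definition anti1 (I : pinterval) : point := (I.1.1, I.2.2).
Definition anti2 (I : pinterval) : point := (I.2.1, I.1.2).

Definition binom (K : fieldType) (P : seq point) (I : pinterval) : {mpoly K[nV P]} :=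
  xv K P (diag1 I) * xv K P (diag2 I) - xv K P (anti1 I) * xv K P (anti2 I).

Definition in_IP (K : fieldType) (P : seq point) (f : {mpoly K[nV P]}) : Prop :=
  exists s : seq ({mpoly K[nV P]} * pinterval),
    (forall q, q \in s -> inner_interval P q.2) /\
    f = \sum_(q <- s) q.1 * binom K P q.2.

Definition zerodivisor_KP (K : fieldType) (P : seq point) (g : {mpoly K[nV P]}) : Prop :=
  exists h : {mpoly K[nV P]}, ~ in_IP h /\ in_IP (g * h).

Definition edge_of_P (P : seq point) (p q : point) : Prop :=
  exists c, c \in P /\ (((p, q) \in cell_edges c) || ((q, p) \in cell_edges c)).

Definition horiz_edge_interval (P : seq point) (j i k : nat) : Prop :=
  (i <= k)%N /\ forall t, (i <= t < k)%N -> edge_of_P P (t, j) (t.+1, j).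
Definition vert_edge_interval (P : seq point) (i j k : nat) : Prop :=
  (j <= k)%N /\ forall t, (j <= t < k)%N -> edge_of_P P (i, t) (i, t.+1).

Definition on_common_edge_interval (P : seq point) (p q : point) : Prop :=
  (exists j i k, horiz_edge_interval P j i k /\
     p.2 = j /\ q.2 = j /\ (i <= p.1 <= k)%N /\ (i <= q.1 <= k)%N) \/
  (exists i j k, vert_edge_interval P i j k /\
     p.1 = i /\ q.1 = i /\ (j <= p.2 <= k)%N /\ (j <= q.2 <= k)%N).

Definition same_pair (p q r s : point) : Prop :=
  (p = r /\ q = s) \/ (p = s /\ q = r).

(* Zig-zag walk I_1..I_l, 0-indexed: I 0 .. I (l-1); corners v i, z i, u i,
   v (i+1) of I i, with v l = v 0. *)
Definition zigzag_walk (P : seq point) (l : nat) (I : nat -> pinterval)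
    (v z u : nat -> point) : Prop :=
  (0 < l)%N /\
    (forall i, (i < l)%N -> inner_interval P (I i)) /\
    (forall i j, (i < l)%N -> (j < l)%N -> i <> j -> I i <> I j) /\
    (forall i, (i < l)%N ->
       (same_pair (v i) (z i) (diag1 (I i)) (diag2 (I i)) /\
        same_pair (u i) (v i.+1) (anti1 (I i)) (anti2 (I i))) \/
       (same_pair (v i) (z i) (anti1 (I i)) (anti2 (I i)) /\
        same_pair (u i) (v i.+1) (diag1 (I i)) (diag2 (I i)))) /\
    (v l = v 0 /\
     (forall p, (in_interval (I 0) p && in_interval (I l.-1) p) <-> p = v 0) /\
     (forall i, (i < l.-1)%N ->
        forall p, (in_interval (I i) p && in_interval (I i.+1) p) <-> p = v i.+1)) /\
    (forall i, (i < l)%N -> on_common_edge_interval P (v i) (v i.+1)) /\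
    (forall i j, (i < l)%N -> (j < l)%N -> i <> j ->
       ~ exists J, inner_interval P J /\ in_interval J (z i) /\ in_interval J (z j)).

(* Main.v *)
Require Import Defs.
From HB Require Import structures.
From mathcomp Require Import all_boot all_algebra.
From mathcomp Require Import mpoly.
From mathcomp Require Import zify ring.
Import GRing.Theory.
Local Open Scope ring_scope.

Section S.
Variables (K : fieldType) (P : seq point).
Local Notation x := (xv K P).
Local Notation IP := (@in_IP K P).

Lemma IP0 : IP (0 : {mpoly K[nV P]}).
Proof. by exists [::]; rewrite big_nil. Qed.

Lemma IPD f g : IP f -> IP g -> IP (f + g).
Proof.
move=> [s1 [H1 ->]] [s2 [H2 ->]]; exists (s1 ++ s2); split; last by rewrite big_cat.
by move=> q; rewrite mem_cat => /orP [/H1|/H2].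
Qed.

Lemma IPM g f : IP f -> IP (g * f).
Proof.
move=> [s [H ->]]; exists (map (fun q => (g * q.1, q.2)) s); split.
  by move=> q /mapP [q' /H Hq ->].
by rewrite big_map mulr_sumr; apply: eq_bigr => q _; rewrite mulrA.
Qed.

Lemma IPN f : IP f -> IP (- f).
Proof. by move=> /(IPM (-1)); rewrite mulN1r. Qed.

Lemma IPbinom J : inner_interval P J -> IP (binom K P J).
Proof.
by move=> HJ; exists [:: (1, J)]; split; [move=> q; rewrite inE => /eqP -> | rewrite big_seq1 mul1r].
Qed.

Definition corner (J : pinterval) (w : point) :=
  w = diag1 J \/ w = diag2 J \/ w = anti1 J \/ w = anti2 J.

Lemma corner_VP J w : inner_interval P J -> corner J w -> w \in VP P /\ in_interval J w.
Proof.
case: J => [[a1 a2] [b1 b2]] [/andP [/= h1 h2] Hc].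
have memV c y : c \in P -> y \in cell_vertices c -> y \in VP P.
  by move=> Hc' Hy; rewrite mem_undup; apply/flatten_mapP; exists c.
rewrite /in_interval /=.
case=> [->|[->|[->|->]]]; rewrite /anti1 /anti2 /diag1 /diag2 /=; split; rewrite ?leqnn ?(ltnW h1) ?(ltnW h2) //.
- apply: (memV (a1, a2)); last by rewrite inE eqxx.
  by apply: Hc; rewrite /cell_of_interval /=; apply/andP; split; apply/andP; split; lia.
- apply: (memV (b1.-1, b2.-1)).
    by apply: Hc; rewrite /cell_of_interval /=; apply/andP; split; apply/andP; split; lia.
  by rewrite /cell_vertices /= !prednK ?inE ?eqxx ?orbT //; lia.
- apply: (memV (a1, b2.-1)).
    by apply: Hc; rewrite /cell_of_interval /=; apply/andP; split; apply/andP; split; lia.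
  by rewrite /cell_vertices /= !prednK ?inE ?eqxx ?orbT //; lia.
- apply: (memV (b1.-1, a2)).
    by apply: Hc; rewrite /cell_of_interval /=; apply/andP; split; apply/andP; split; lia.
  by rewrite /cell_vertices /= !prednK ?inE ?eqxx ?orbT //; lia.
Qed.

Lemma valid_distinct J : valid_interval J ->
  (diag1 J <> diag2 J /\ anti1 J <> anti2 J) /\
      [/\ diag1 J <> anti1 J, diag1 J <> anti2 J, diag2 J <> anti1 J & diag2 J <> anti2 J].
Proof.
case: J => [[a1 a2] [b1 b2]] /andP [/= h1 h2].
rewrite /diag1 /diag2 /anti1 /anti2 /=.
by do ! split; case; lia.
Qed.


Definition ev (T : pred point) : 'I_(nV P) -> K :=
  fun i => (T (nth (0%N, 0%N) (VP P) i))%:R.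

Lemma xv_eval T w : (x w).@[ev T] = ((w \in VP P) && T w)%:R.
Proof.
rewrite /xv; case: insubP => [i Hi Hv|Hn].
  rewrite mevalXU /ev Hv nth_index; last by rewrite -index_mem.
  by move: Hi; rewrite index_mem => ->.
rewrite meval0; move: Hn; rewrite index_mem => /negbTE -> //.
Qed.

Lemma meval_sum (vv : 'I_(nV P) -> K) (s : seq ({mpoly K[nV P]} * pinterval)) F :
  (\sum_(q <- s) F q).@[vv] = \sum_(q <- s) (F q).@[vv].
Proof. exact: raddf_sum. Qed.

Lemma IP_eval T f :
  (forall J, inner_interval P J -> ~~ (T (diag1 J) && T (diag2 J)) /\ ~~ (T (anti1 J) && T (anti2 J))) ->
  IP f -> f.@[ev T] = 0.
Proof.
move=> HT [s [Hs ->]]; rewrite meval_sum big1_seq // => q /Hs /HT [H1 H2].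
rewrite mevalM /binom mevalB !mevalM !xv_eval -!natrM.
have E a b c d : ~~ (T a && T b) -> (((c && T a) * (d && T b))%N = 0%N).
  by case: (T a); case: (T b); rewrite ?andbF ?andbT //= ?muln0.
by rewrite (E _ _ _ _ H1) (E _ _ _ _ H2) subrr mulr0.
Qed.

Lemma not_IP T f :
  (forall J, inner_interval P J -> ~~ (T (diag1 J) && T (diag2 J)) /\ ~~ (T (anti1 J) && T (anti2 J))) ->
  f.@[ev T] != 0 -> ~ IP f.
Proof. by move=> HT Hf /(@IP_eval T f HT) H; rewrite H eqxx in Hf. Qed.

Lemma chain (l : nat) (v z u : nat -> point) (j m : nat) :
  (forall k, (k < l)%N -> IP (x (v k) * x (z k) - x (u k) * x (v k.+1))) ->
  (j <= m <= l)%N ->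
  IP (x (v j) * \prod_(j <= k < m) x (z k) - x (v m) * \prod_(j <= k < m) x (u k)).
Proof.
move=> Hs /andP [hjm hml]; elim: m hjm hml => [|m IH] hjm hml.
  by rewrite leqn0 in hjm; rewrite (eqP hjm) !big_geq // subrr; apply: IP0.
case: (ltngtP j m.+1) hjm => // [hj|->] _; last by rewrite !big_geq // subrr; apply: IP0.
rewrite !big_nat_recr //=.
have H1 := IPM (x (z m)) _ (IH hj (ltnW hml)).
have H2 := IPM (\prod_(j <= k < m) x (u k)) _ (Hs m hml).
have := IPD _ _ H1 H2.
set A := x (v j); set Z := \prod_(_ <= _ < _) _; set U := \prod_(_ <= _ < _) _.
by congr IP; ring.
Qed.


Lemma IP_eq f g : IP f -> f = g -> IP g.
Proof. by move=> H <-. Qed.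

Lemma meval_prod (vv : 'I_(nV P) -> K) (l : nat) (F : 'I_l -> {mpoly K[nV P]}) :
  (\prod_(k < l) F k).@[vv] = \prod_(k < l) (F k).@[vv].
Proof. exact: rmorph_prod. Qed.

End S.
Arguments chain [K P l v z u] j m.
Arguments corner_VP [P] J w.
Arguments IPD {K P} f g.
Arguments IPM {K P} g f.
Arguments IPN {K P} f.
Arguments IPbinom {K P} J.
Arguments IP_eq {K P} f g.
Arguments IP0 {K P}.

Theorem proposition3p5 (K : fieldType) (P : seq point) (l : nat)
    (I : nat -> pinterval) (v z u : nat -> point) :
  is_polyomino P ->
  zigzag_walk P l I v z u ->
  let fW := \prod_(k < l) xv K P (z k) - \prod_(j < l) xv K P (u j) in
  zerodivisor_KP fW /\
  (forall i, (i < l)%N ->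
     zerodivisor_KP (xv K P (v i)) /\ in_IP (xv K P (v i) * fW)).
Proof.
move=> _ [l0 [Hin [_ [Hcorn [[Hvl [_ _]] [_ HZ3]]]]]] fW.
have Hc k : (k < l)%N ->
  [/\ corner (I k) (v k), corner (I k) (z k), corner (I k) (u k) & u k <> z k].
  move=> hk; have [[? ?] [? ? ? ?]] := valid_distinct (I k) (Hin k hk).1.
  rewrite /corner.
  case: (Hcorn k hk) => [[[[-> ->]|[-> ->]] [[-> _]|[-> _]]]|[[[-> ->]|[-> ->]] [[-> _]|[-> _]]]];
  split; intuition congruence.
have Hstep k : (k < l)%N ->
   @in_IP K P (xv K P (v k) * xv K P (z k) - xv K P (u k) * xv K P (v k.+1)).
  move=> hk; have Hb := @IPbinom K P _ (Hin k hk); have Hn := IPN _ Hb; rewrite /binom in Hb Hn.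
  case: (Hcorn k hk) => [[[[E1 E2]|[E1 E2]] [[E3 E4]|[E3 E4]]]|[[[E1 E2]|[E1 E2]] [[E3 E4]|[E3 E4]]]];
  rewrite E1 E2 E3 E4;
  first [ apply: (IP_eq _ _ Hb); ring | apply: (IP_eq _ _ Hn); ring ].
have HvfW i : (i < l)%N -> in_IP (xv K P (v i) * fW).
  move=> hi; rewrite /fW -(big_mkord xpredT (fun k => xv K P (z k)))
     -(big_mkord xpredT (fun k => xv K P (u k))).
  rewrite (big_cat_nat (leq0n i) (ltnW hi)) (big_cat_nat (leq0n i) (ltnW hi)) /=.
  have C1 := chain i l Hstep; rewrite (ltnW hi) leqnn Hvl /= in C1.
  have C2 := chain 0 i Hstep; rewrite (ltnW hi) /= in C2.
  have := IPD _ _ (IPM (\prod_(0 <= k < i) xv K P (z k)) _ (C1 isT))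
                  (IPM (\prod_(i <= k < l) xv K P (u k)) _ (C2 isT)).
  move=> H; apply: (IP_eq _ _ H); ring.
have cornV k w : (k < l)%N -> corner (I k) w -> w \in VP P /\ in_interval (I k) w.
  by move=> hk; apply: corner_VP (Hin k hk).
split.
  exists (xv K P (v 0)); split; last by rewrite mulrC; exact: HvfW 0%N l0.
  apply: (@not_IP K P (pred1 (v 0))).
    move=> J HJ; have [[D1 D2] _] := valid_distinct J HJ.1.
    by split; apply/negP => /andP [/eqP E1 /eqP E2]; [apply: D1|apply: D2]; congruence.
  case: (Hc 0%N l0) => cv _ _ _.
  by rewrite xv_eval /= eqxx andbT (cornV 0%N _ l0 cv).1 oner_neq0.
move=> i hi; split; last exact: HvfW i hi.
exists fW; split; last exact: HvfW i hi.
pose T := fun p : point => p \in map z (iota 0 l).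
apply: (@not_IP K P T).
  move=> J HJ; have [[D1 D2] _] := valid_distinct J HJ.1.
  have key a b : a <> b -> corner J a -> corner J b -> ~~ (T a && T b).
    move=> Dab ca cb; apply/negP => /andP [/mapP [i1 Hi1 E1] /mapP [i2 Hi2 E2]].
    rewrite mem_iota add0n leq0n /= in Hi1; rewrite mem_iota add0n leq0n /= in Hi2.
    apply: (HZ3 i1 i2 Hi1 Hi2); first by move=> E; apply: Dab; rewrite E1 E2 E.
    exists J; rewrite -E1 -E2; split; first done.
    by split; [exact: (corner_VP J a HJ ca).2 | exact: (corner_VP J b HJ cb).2].
  by split; apply: key => //; rewrite /corner; tauto.
have P1 : \prod_(k < l) (xv K P (z k)).@[ev K P T] = 1.
  apply: big1 => k _; rewrite xv_eval.
  case: (Hc k (ltn_ord k)) => _ cz _ _.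
  rewrite (cornV k _ (ltn_ord k) cz).1 /T map_f //.
  by rewrite mem_iota add0n leq0n ltn_ord.
have P2 : \prod_(k < l) (xv K P (u k)).@[ev K P T] = 0.
  rewrite (bigD1 (Ordinal l0)) //= xv_eval.
  suff -> : T (u 0%N) = false by rewrite andbF mul0r.
  apply/negP => /mapP [k Hk E].
  rewrite mem_iota add0n leq0n /= in Hk.
  case: (Hc 0%N l0) => _ cz cu Duz.
  case: (eqVneq k 0%N) => [Ek|Nk]; first by apply: Duz; rewrite E Ek.
  apply: (HZ3 0%N k l0 Hk); first by move=> E0; rewrite -E0 eqxx in Nk.
  exists (I 0%N); split; first exact: Hin 0%N l0.
  by split; [exact: (cornV 0%N _ l0 cz).2 | rewrite -E; exact: (cornV 0%N _ l0 cu).2].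
by rewrite /fW mevalB !meval_prod P1 P2 subr0 oner_neq0.
Qed.
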